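(* Let $\mathcal{H}$ be a real Hilbert space, and let $C$ and $Q$ be nonempty, closed and convex subsets of $\mathcal{H}$. Let $f:\mathcal{H}\to\mathcal{H}$ be $\alpha_1$-inverse strongly monotone and $g:\mathcal{H}\to\mathcal{H}$ be $\alpha_2$-inverse strongly monotone, for some $\alpha_1,\alpha_2>0$. Set $\alpha:=\min\{\alpha_1,\alpha_2\}$ and let $\lambda\in(0,2\alpha)$. Assume that $\Gamma:=SOL(C,f)\cap SOL(Q,g)\neq\emptyset$. Given an arbitrary $x^0\in\mathcal{H}$, define the sequences $$y^k=P_Q\big(x^k-\lambda g(x^k)\big),\qquad x^{k+1}=P_C\big(y^k-\lambda f(y^k)\big),\qquad k=0,1,2,\ldots.$$ Then $\{x^k\}_{k=0}^\infty$ converges weakly to a point $x^\ast\in\Gamma$, and moreover $x^\ast=\lim_{k\to\infty}P_\Gamma(x^k)$ (strong limit).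
   Context: An operator $h:\mathcal{H}\to\mathcal{H}$ is $\beta$-inverse strongly monotone ($\beta>0$) if $\langle h(x)-h(y),x-y\rangle\geq\beta\|h(x)-h(y)\|^2$ for all $x,y\in\mathcal{H}$. For a nonempty closed convex set $D\subset\mathcal{H}$, $P_D$ denotes the metric (nearest point) projection onto $D$. For such $D$ and an operator $h$, $SOL(D,h)$ denotes the solution set of the variational inequality: the set of $x^\ast\in D$ with $\langle h(x^\ast),x-x^\ast\rangle\geq 0$ for all $x\in D$. The set $\Gamma$ is closed and convex (so $P_\Gamma$ is well defined when $\Gamma\ne\emptyset$). *)

(* Defs.v *)
(* A real Hilbert space is modelled as a complete
   normed module over a realType R whose norm is induced by an inner product. *)
From HB Require Import structures.
From mathcomp Require Import all_boot all_order all_algebra.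
From mathcomp Require Import all_classical all_reals all_analysis.
Set Implicit Arguments. Unset Strict Implicit. Unset Printing Implicit Defensive.
Import Order.TTheory GRing.Theory Num.Theory.
Import numFieldNormedType.Exports.
Local Open Scope classical_set_scope.
Local Open Scope ring_scope.

Definition is_inner_product (R : realType) (H : normedModType R)
  (inner : H -> H -> R) : Prop :=
  [/\ (forall x y, inner x y = inner y x),
      (forall (a : R) x y z, inner (a *: x + y) z = a * inner x z + inner y z)
    & (forall x, inner x x = `|x| ^+ 2)].

Definition convex_set (R : realType) (H : normedModType R) (D : set H) : Prop :=
  forall a b (t : R), D a -> D b -> 0 <= t -> t <= 1 ->
    D (t *: a + (1 - t) *: b).

Definition nonempty_closed_convex (R : realType) (H : normedModType R)
  (D : set H) : Prop := D !=set0 /\ closed D /\ convex_set D.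

Definition inverse_strongly_monotone (R : realType) (H : normedModType R)
  (inner : H -> H -> R) (beta : R) (h : H -> H) : Prop :=
  forall x y, inner (h x - h y) (x - y) >= beta * `|h x - h y| ^+ 2.

Definition is_metric_projection (R : realType) (H : normedModType R)
  (D : set H) (P : H -> H) : Prop :=
  forall x, D (P x) /\ forall z, D z -> `|x - P x| <= `|x - z|.

Definition SOL (R : realType) (H : normedModType R) (inner : H -> H -> R)
  (D : set H) (h : H -> H) : set H :=
  [set xs | D xs /\ forall z, D z -> 0 <= inner (h xs) (z - xs)].

Definition weakly_converges (R : realType) (H : normedModType R)
  (inner : H -> H -> R) (u : nat -> H) (l : H) : Prop :=
  forall z, (fun k => inner (u k) z) @ \oo --> inner l z.

(* Main.v *)
Require Import Defs.
From HB Require Import structures.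
From mathcomp Require Import all_boot all_order all_algebra.
From mathcomp Require Import all_classical all_reals all_analysis.
From mathcomp Require Import ring lra.
Import Order.TTheory GRing.Theory Num.Theory.
Import numFieldNormedType.Exports.
Local Open Scope classical_set_scope.
Local Open Scope ring_scope.
Set Implicit Arguments. Unset Strict Implicit. Unset Printing Implicit Defensive.

Section Inner.
Variables (R : realType) (H : completeNormedModType R) (ip : H -> H -> R).
Hypothesis hI : is_inner_product ip.

Lemma ipC x y : ip x y = ip y x.
Proof. by case: hI. Qed.

Lemma ipxx x : ip x x = `|x| ^+ 2.
Proof. by case: hI. Qed.

Lemma ipL a x y z : ip (a *: x + y) z = a * ip x z + ip y z.
Proof. by case: hI => _ h _; apply: h. Qed.

Lemma ip0l z : ip 0 z = 0.
Proof.
have := ipL 1 0 0 z; rewrite scaler0 addr0 mul1r => h; lra.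
Qed.

Lemma ipDl x y z : ip (x + y) z = ip x z + ip y z.
Proof. by rewrite -[x in LHS]scale1r ipL mul1r. Qed.

Lemma ipZl a x z : ip (a *: x) z = a * ip x z.
Proof. by rewrite -[a *: x]addr0 ipL ip0l addr0. Qed.

Lemma ipNl x z : ip (- x) z = - ip x z.
Proof. by rewrite -scaleN1r ipZl mulN1r. Qed.

Lemma ipBl x y z : ip (x - y) z = ip x z - ip y z.
Proof. by rewrite ipDl ipNl. Qed.

Lemma ip0r z : ip z 0 = 0.
Proof. by rewrite ipC ip0l. Qed.
Lemma ipDr x y z : ip z (x + y) = ip z x + ip z y.
Proof. by rewrite ipC ipDl !(ipC z). Qed.
Lemma ipZr a x z : ip z (a *: x) = a * ip z x.
Proof. by rewrite ipC ipZl ipC. Qed.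
Lemma ipNr x z : ip z (- x) = - ip z x.
Proof. by rewrite ipC ipNl ipC. Qed.
Lemma ipBr x y z : ip z (x - y) = ip z x - ip z y.
Proof. by rewrite ipDr ipNr. Qed.

Lemma ipn2 x : `|x| ^+ 2 = ip x x.
Proof. by rewrite ipxx. Qed.

Lemma ip_ge0 x : 0 <= ip x x.
Proof. by rewrite ipxx sqr_ge0. Qed.

Lemma CS x y : `|ip x y| <= `|x| * `|y|.
Proof.
have [->|y0] := eqVneq y 0; first by rewrite ip0r normr0 normr0 mulr0.
have ny : 0 < `|y| by rewrite normr_gt0.
pose t := ip x y / `|y| ^+ 2.
have h := ip_ge0 (x - t *: y).
rewrite !(ipBl, ipBr, ipZl, ipZr) (ipC y x) !ipxx in h.
have e : (ip x y) ^+ 2 <= (`|x| * `|y|) ^+ 2.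
  have yy : `|y| ^+ 2 != 0 by rewrite sqrf_eq0 gt_eqF.
  have : 0 <= `|y| ^+ 2 * (`|x| ^+ 2 - t * ip x y - (t * ip x y - t * (t * `|y| ^+ 2))).
    by rewrite mulr_ge0 // sqr_ge0.
  rewrite /t; set c := ip x y; set n := `|y| ^+ 2.
  have -> : n * (`|x| ^+ 2 - c / n * c - (c / n * c - c / n * (c / n * n))) =
     n * `|x| ^+ 2 - c ^+ 2 by field.
  by rewrite exprMn mulrC subr_ge0.
rewrite -(@ler_pXn2r _ 2) //= ?nnegrE ?mulr_ge0 //.
by rewrite real_normK // num_real.
Qed.

Lemma CS' x y : ip x y <= `|x| * `|y|.
Proof. exact: le_trans (ler_norm _) (CS x y). Qed.
Lemma CS'' x y : - (`|x| * `|y|) <= ip x y.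
Proof. by rewrite lerNl -ipNl; apply: le_trans (CS' _ _) _; rewrite normrN. Qed.

Lemma vec_eq a b : ip (a - b) (a - b) = 0 -> a = b.
Proof. by rewrite ipxx => /eqP; rewrite sqrf_eq0 normr_eq0 subr_eq0 => /eqP. Qed.

Ltac ipexp := rewrite ?(ipBl, ipBr, ipDl, ipDr, ipZl, ipZr, ipNl, ipNr, ip0l, ip0r).

Section Proj.
Variables (D : set H) (P : H -> H).
Hypothesis hconv : Defs.convex_set D.
Hypothesis hP : is_metric_projection D P.

Lemma proj_in x : D (P x).
Proof. by case: (hP x). Qed.

Lemma proj_var x z : D z -> ip (x - P x) (z - P x) <= 0.
Proof.
move=> Dz; set p := P x.
have key t : 0 < t -> t <= 1 -> 2 * ip (x - p) (z - p) <= t * ip (z - p) (z - p).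
  move=> t0 t1.
  have Dt := hconv Dz (proj_in x) (ltW t0) t1.
  have h1 := (hP x).2 _ Dt.
  have h2 : `|x - p| ^+ 2 <= `|x - (t *: z + (1 - t) *: p)| ^+ 2.
    by rewrite lerXn2r // nnegrE.
  rewrite -!ipxx in h2; ipexp; ipexp.
  move: h2; ipexp.
  rewrite ?(ipC p z) ?(ipC p x) ?(ipC z x) => h2.
  have : 0 <= t * (t * (ip z z - 2 * ip z p + ip p p) - 2 * (ip x z - ip x p - ip z p + ip p p)).
    rewrite ?(ipC p z) ?(ipC p x) ?(ipC z x); lra.
  rewrite pmulr_rge0 //; lra.
rewrite leNgt; apply/negP => c0.
set c := ip (x - p) (z - p) in key c0.
set d := ip (z - p) (z - p) in key.
have d0 : 0 <= d by apply: ip_ge0.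
have K0 : 0 < d + c + 1 by lra.
pose t := c / (d + c + 1).
have t0 : 0 < t by apply: divr_gt0.
have t1 : t <= 1 by rewrite ler_pdivrMr // mul1r; lra.
have := key t t0 t1.
have ht : t * (d + c + 1) = c by rewrite /t mulfVK // gt_eqF.
nra.
Qed.

Lemma proj_firm u v :
  ip (P u - P v) (P u - P v) + ip ((u - P u) - (v - P v)) ((u - P u) - (v - P v))
  <= ip (u - v) (u - v).
Proof.
have h1 := proj_var u (proj_in v).
have h2 := proj_var v (proj_in u).
move: h1 h2; set a := P u; set b := P v; ipexp.
rewrite ?(ipC v u) ?(ipC a u) ?(ipC b u) ?(ipC a v) ?(ipC b v) ?(ipC b a).
move=> h1 h2; lra.
Qed.

Lemma step_ineq (h : H -> H) (beta lam : R) (p x : H) :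
  inverse_strongly_monotone ip beta h -> 0 <= lam ->
  P (p - lam *: h p) = p ->
  ip (P (x - lam *: h x) - p) (P (x - lam *: h x) - p)
  + ip ((x - P (x - lam *: h x)) - lam *: (h x - h p))
       ((x - P (x - lam *: h x)) - lam *: (h x - h p))
  + lam * (2 * beta - lam) * `|h x - h p| ^+ 2
  <= ip (x - p) (x - p).
Proof.
move=> hism lam0 fixp.
have F := proj_firm (x - lam *: h x) (p - lam *: h p).
rewrite fixp in F.
have ism := hism x p.
set y := P (x - lam *: h x) in F *.
have e1 : ((x - lam *: h x - y) - (p - lam *: h p - p)) = (x - y) - lam *: (h x - h p).
  apply: vec_eq; ipexp.
  rewrite ?(ipC p x) ?(ipC (h x) x) ?(ipC (h p) x) ?(ipC (h x) p) ?(ipC (h p) p) ?(ipC (h p) (h x)).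
  rewrite ?(ipC y x) ?(ipC y p) ?(ipC y (h x)) ?(ipC y (h p)).
  lra.
rewrite e1 in F.
have e2 : ip (x - lam *: h x - (p - lam *: h p)) (x - lam *: h x - (p - lam *: h p))
  = ip (x - p) (x - p) - 2 * lam * ip (h x - h p) (x - p) + lam ^+ 2 * `|h x - h p| ^+ 2.
  rewrite -ipxx; ipexp.
  rewrite ?(ipC p x) ?(ipC (h x) x) ?(ipC (h p) x) ?(ipC (h x) p) ?(ipC (h p) p) ?(ipC (h p) (h x)).
  rewrite ?(ipC x (h x)) ?(ipC x (h p)) ?(ipC p (h x)) ?(ipC p (h p)) .
  lra.
rewrite e2 in F.
have : lam * (beta * `|h x - h p| ^+ 2) <= lam * ip (h x - h p) (x - p) by apply: ler_wpM2l.
lra.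
Qed.

Lemma sol_fix (h : H -> H) (lam : R) p : 0 <= lam -> SOL ip D h p ->
  P (p - lam *: h p) = p.
Proof.
move=> lam0 [Dp hp].
have h1 := proj_var (p - lam *: h p) Dp.
have h2 := hp _ (proj_in (p - lam *: h p)).
move: h1 h2; set q := P _ => h1 h2.
apply: vec_eq.
have h3 : lam * 0 <= lam * ip (h p) (q - p) by apply: ler_wpM2l.
move: h1 h3; ipexp.
rewrite ?(ipC q p) ?(ipC (h p) p) ?(ipC (h p) q) => h1 h3.
have h4 := ip_ge0 (q - p); move: h4; ipexp.
rewrite ?(ipC q p) => h4.
lra.
Qed.

End Proj.

Lemma sol_convex (D : set H) (h : H -> H) (beta : R) :
  Defs.convex_set D -> 0 < beta -> inverse_strongly_monotone ip beta h ->
  Defs.convex_set (SOL ip D h).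
Proof.
move=> cD b0 hism a b t [Da ha] [Db hb] t0 t1.
set z := t *: a + (1 - t) *: b.
have hab : h a = h b.
  apply: vec_eq.
  have i1 := ha _ Db; have i2 := hb _ Da; have i3 := hism a b.
  rewrite -ipxx in i3.
  have i4 := ip_ge0 (h a - h b).
  have : beta * ip (h a - h b) (h a - h b) <= 0 by move: i1 i2 i3; ipexp;
    rewrite ?(ipC b a) ?(ipC (h a) a) ?(ipC (h b) a) ?(ipC (h a) b) ?(ipC (h b) b) ?(ipC (h b) (h a)); lra.
  by rewrite pmulr_rle0 // => i5; apply/eqP; rewrite eq_le i5.
have hz : h z = h a.
  apply: vec_eq.
  have i1 := hism z a; have i2 := hism z b.
  rewrite -hab -ipxx in i2; rewrite -ipxx in i1.
  have j1 : t * (beta * ip (h z - h a) (h z - h a)) <= t * ip (h z - h a) (z - a) by apply: ler_wpM2l.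
  have j2 : (1 - t) * (beta * ip (h z - h a) (h z - h a)) <= (1 - t) * ip (h z - h a) (z - b)
    by apply: ler_wpM2l; lra.
  have i4 := ip_ge0 (h z - h a).
  have : beta * ip (h z - h a) (h z - h a) <= 0.
    move: j1 j2; rewrite /z; ipexp.
    rewrite ?(ipC b a) ?(ipC (h a) a) ?(ipC (h z) a) ?(ipC (h a) b) ?(ipC (h z) b) ?(ipC (h z) (h a)).
    move=> j1 j2; lra.
  by rewrite pmulr_rle0 // => i5; apply/eqP; rewrite eq_le i5.
split; first exact: cD.
move=> w Dw; rewrite hz.
have j1 : t * 0 <= t * ip (h a) (w - a) by apply: ler_wpM2l => //; exact: ha.
have j2 : (1 - t) * 0 <= (1 - t) * ip (h b) (w - b) by apply: ler_wpM2l; [lra| exact: hb].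
rewrite -hab in j2.
move: j1 j2; rewrite /z; ipexp => j1 j2; lra.
Qed.

Lemma mono_le (a : nat -> R) : (forall k, a k.+1 <= a k) ->
  forall k m, (k <= m)%N -> a m <= a k.
Proof.
move=> ha k m /subnK <-; elim: (m - k)%N => [|n IH]; first by rewrite add0n.
by rewrite addSn; apply: le_trans (ha _) IH.
Qed.

Lemma mono_small (a : nat -> R) : (forall k, a k.+1 <= a k) -> (forall k, 0 <= a k) ->
  forall e, 0 < e -> exists N, forall m, (N <= m)%N -> a N - a m < e.
Proof.
move=> ha a0 e e0.
have hinf : has_inf (range a).
  split; first by exists (a 0%N), 0%N.
  by exists 0 => _ [k _ <-].
have [_ [N _ <-] hN] := inf_adherent e0 hinf.
exists N => m _.
have : inf (range a) <= a m by apply: (ge_inf hinf.2); exists m.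
lra.
Qed.

Lemma riesz (L : H -> R) (B : R) :
  (forall a u v, L (a *: u + v) = a * L u + L v) ->
  (forall v, `|L v| <= B * `|v|) -> exists w, forall v, L v = ip w v.
Proof.
move=> Llin Lb.
have L0 : L 0 = 0 by have := Llin 1 0 0; rewrite scaler0 addr0 mul1r; lra.
have LZ a u : L (a *: u) = a * L u by rewrite -[a *: u]addr0 Llin L0 addr0.
have LD u v : L (u + v) = L u + L v by have := Llin 1 u v; rewrite scale1r mul1r.
have LN u : L (- u) = - L u by rewrite -scaleN1r LZ mulN1r.
have LB u v : L (u - v) = L u - L v by rewrite LD LN.
pose Phi y := ip y y - 2 * L y.
have Phib y : - B ^+ 2 <= Phi y.
  rewrite /Phi ipxx; have := Lb y; have := sqr_ge0 (`|y| - B).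
  have := ler_norm (L y); nra.
have hinf : has_inf (range Phi).
  split; first by exists (Phi 0), 0.
  by exists (- B ^+ 2) => _ [y _ <-].
set m := inf (range Phi).
have Phim y : m <= Phi y by apply: (ge_inf hinf.2); exists y.
have mid a b : ip (a - b) (a - b) <= 2 * (Phi a - m) + 2 * (Phi b - m).
  have := Phim ((2^-1) *: (a + b)); rewrite /Phi LZ LD.
  ipexp; rewrite ?(ipC b a).
  have : (2:R)^-1 * 2 = 1 by rewrite mulVf.
  nra.
pose S d := [set y | Phi y < m + d].
pose Fi := filter_from [set d : R | 0 < d] S.
have FiF : Filter Fi.
  apply: filter_from_filter; first by exists 1; rewrite /= ltr01.
  move=> i j i0 j0; exists (Num.min i j); first by rewrite /= lt_min i0 j0.
  move=> y; rewrite /S /= => hy; split.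
    by apply: (lt_le_trans hy); rewrite lerD2l ge_min lexx.
  by apply: (lt_le_trans hy); rewrite lerD2l ge_min lexx orbT.
have Sne d : 0 < d -> S d !=set0.
  move=> d0; have [e0 [yy _ ye] hy] := inf_adherent d0 hinf; exists yy; rewrite /S /= ye; exact: hy.
have FiP : ProperFilter Fi by apply: filter_from_proper.
have : cvg Fi.
  apply/cauchy_cvgP; apply: cauchy_exP => eps eps0.
  have d0 : 0 < eps ^+ 2 / 8 by apply: divr_gt0; rewrite ?exprn_gt0.
  have [c Sc] := Sne _ d0.
  exists c; exists (eps ^+ 2 / 8) => // y Sy.
  rewrite -ball_normE /=.
  have := mid c y; rewrite ipxx; move: Sc Sy; rewrite /S /= => Sc Sy hm.
  rewrite ltNge; apply/negP => hc.
  nra.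
move=> /cvg_ex [w Fw].
exists w => v.
set c0 := ip w v - L v.
set n := ip v v.
have n0 : 0 <= n by apply: ip_ge0.
have quad t : 0 <= 2 * t * c0 + t ^+ 2 * n.
  rewrite leNgt; apply/negP => hneg.
  set del := - (2 * t * c0 + t ^+ 2 * n) / 4.
  have del0 : 0 < del by rewrite /del divr_gt0 // oppr_gt0.
  pose r := del / (2 * `|t| * `|v| + 1).
  have r0 : 0 < r by rewrite /r divr_gt0 // ltr_wpDl // mulr_ge0 // mulr_ge0.
  have FB : Fi (ball w r) by apply: Fw; apply: nbhsx_ballx.
  have FS : Fi (S del) by exists del.
  have [yy [byy Syy]] := filter_ex (filterI FB FS).
  move: byy; rewrite -ball_normE /= => byy.
  have h1 := Phim (yy + t *: v).
  move: Syy; rewrite /S /= => Syy.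
  have e1 : Phi (yy + t *: v) - Phi yy = 2 * t * (ip yy v - L v) + t ^+ 2 * n.
    rewrite /Phi LD LZ /n; ipexp; rewrite (ipC v yy); lra.
  have e2 : `|ip yy v - ip w v| <= `|yy - w| * `|v| by rewrite -ipBl CS.
  have e3 : `|yy - w| <= r by rewrite distrC ltW.
  have e4 : `|2 * t * (ip yy v - ip w v)| <= del.
    rewrite normrM normrM ger0_norm //.
    have : `|ip yy v - ip w v| <= r * `|v|.
      by apply: le_trans e2 _; apply: ler_wpM2r.
    have hr : r * (2 * `|t| * `|v| + 1) = del by rewrite /r mulfVK // gt_eqF // ltr_wpDl // mulr_ge0 // mulr_ge0.
    have := normr_ge0 v; have := normr_ge0 t; have := normr_ge0 (ip yy v - ip w v).
    nra.
  have := ler_norm (2 * t * (ip yy v - ip w v)).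
  rewrite /c0 in hneg del0 *.
  have : 2 * t * (ip yy v - L v) = 2 * t * (ip yy v - ip w v) + 2 * t * (ip w v - L v) by ring.
  have hd : 4 * del = - (2 * t * (ip w v - L v) + t ^+ 2 * n) by rewrite /del /c0; field.
  lra.
have := quad (- c0 / (n + 1)).
have n1 : 0 < n + 1 by lra.
set t := - c0 / (n + 1).
have ht : t * (n + 1) = - c0 by rewrite /t mulfVK // gt_eqF.
move=> hq.
have : 0 <= (n + 1) ^+ 2 * (2 * t * c0 + t ^+ 2 * n) by rewrite mulr_ge0 // sqr_ge0.
have -> : (n + 1) ^+ 2 * (2 * t * c0 + t ^+ 2 * n) = - c0 ^+ 2 * (n + 2).
  have -> : (n + 1) ^+ 2 * (2 * t * c0 + t ^+ 2 * n) = 2 * (t * (n + 1)) * c0 * (n + 1) + (t * (n + 1)) ^+ 2 * n by ring.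
  rewrite ht; ring.
move=> hc.
have h : c0 ^+ 2 <= 0 by nra.
have : c0 == 0 by rewrite -sqrf_eq0 eq_le h sqr_ge0.
rewrite /c0 => /eqP; lra.
Qed.
Lemma ulim_ex (U : set_system nat) (UU : UltraFilter U) (r : nat -> R) (B : R) :
  (forall k, `|r k| <= B) -> cvg (r @ U).
Proof.
move=> rB.
have UP : ProperFilter U by apply: ultra_proper.
have : U (r @^-1` `[- B, B]%classic).
  apply: filterE => k /=; rewrite in_itv /=; rewrite -ler_norml; exact: rB.
move=> HB; have [l [_ cl]] := @segment_compact R (- B) B (r @ U) _ HB.
apply/cvg_ex; exists l => N Nl.
have [//|hC] := in_ultra_setVsetC (r @^-1` N) UU.
have : (r @ U) (~` N) by [].
move=> /cl /(_ Nl) [z [nz zN]]; exfalso; exact: nz.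
Qed.
Definition vanish (s : nat -> H) := forall e, 0 < e -> \forall k \near \oo, `|s k| < e.

Lemma vanish_sym (a b : nat -> H) : vanish (fun k => a k - b k) -> vanish (fun k => b k - a k).
Proof.
move=> h e e0; near=> k; rewrite distrC; near: k; exact: h.
Unshelve. all: by end_near.
Qed.

Section UL.
Variables (U : set_system nat) (UU : UltraFilter U).
Hypothesis Uinf : forall A, \oo A -> U A.

#[local] Instance UP : ProperFilter U. Proof. by apply: ultra_proper. Qed.

Lemma lim0_bound (r : nat -> R) (s : nat -> H) (K : R) : 0 <= K ->
  (forall k, `|r k| <= K * `|s k|) -> vanish s -> r @ U --> 0.
Proof.
move=> K0 rb vs; apply/cvgr0Pnorm_lt => eps eps0.
have e0 : 0 < eps / (K + 1) by apply: divr_gt0 => //; lra.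
apply: Uinf; apply: filterS (vs _ e0) => k /= hk.
apply: le_lt_trans (rb k) _.
have hK : eps / (K + 1) * (K + 1) = eps by rewrite mulfVK // gt_eqF //; lra.
have := normr_ge0 (s k); nra.
Qed.

Lemma nearU_all (Pr : nat -> Prop) : (forall k, Pr k) -> \forall k \near U, Pr k.
Proof. by move=> h; apply: filterE. Qed.

Lemma cvgU_eq (r r' : nat -> R) (l : R) : (forall k, r k = r' k) -> r' @ U --> l -> r @ U --> l.
Proof. by move=> e; have -> : r = r' by apply: funext. Qed.

Lemma wk_lim (z : nat -> H) (B : R) : (forall k, `|z k| <= B) ->
  exists w, forall v, (fun k => ip (z k) v) @ U --> ip w v.
Proof.
move=> zB.
have B0 : 0 <= B by apply: le_trans (zB 0%N).
have hb v k : `|ip (z k) v| <= B * `|v|.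
  by apply: le_trans (CS _ _) _; apply: ler_wpM2r.
have hc v : cvg ((fun k => ip (z k) v) @ U) by apply: (ulim_ex UU (hb v)).
pose L v := lim ((fun k => ip (z k) v) @ U).
have hL v : (fun k => ip (z k) v) @ U --> L v by apply: hc.
have Llin a u v : L (a *: u + v) = a * L u + L v.
  apply: (cvg_lim _); first exact: Rhausdorff.
  apply: (cvgU_eq (r' := fun k => a * ip (z k) u + ip (z k) v)).
    by move=> k; ipexp.
  by apply: cvgD => //; apply: cvgMl_tmp.
have Lb v : `|L v| <= B * `|v|.
  apply: (cvgr_to_le (cvg_norm (hL v))).
  by apply: filterE => k; exact: hb.
have [w hw] := riesz Llin Lb.
by exists w => v; rewrite -hw.
Qed.

Lemma wk_closed (D : set H) (P : H -> H) (z : nat -> H) (w : H) :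
  Defs.convex_set D -> is_metric_projection D P ->
  (forall k, D (z k)) -> (forall v, (fun k => ip (z k) v) @ U --> ip w v) -> D w.
Proof.
move=> hconv hP Dz hw.
set q := P w.
have hk k : ip (z k) (w - q) - ip q (w - q) <= 0.
  have := proj_var hconv hP w (Dz k); rewrite -/q; ipexp; rewrite ?(ipC q (z k)) ?(ipC w (z k)) ?(ipC q w).
  lra.
have hl : (fun k => ip (z k) (w - q) - ip q (w - q)) @ U --> ip w (w - q) - ip q (w - q).
  by apply: cvgB => //; exact: cvg_cst.
have := cvgr_to_le hl (nearU_all hk).
have e : ip w (w - q) - ip q (w - q) = ip (w - q) (w - q) by ipexp; rewrite (ipC w q); lra.
rewrite e => hle.
have -> : w = q.
  apply: vec_eq; apply/eqP; rewrite eq_le hle ip_ge0 //.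
exact: (proj_in hP).
Qed.

Lemma wk_ism (h : H -> H) (beta : R) (p : H) (z : nat -> H) (w : H) (B : R) :
  0 < beta -> inverse_strongly_monotone ip beta h ->
  (forall k, `|z k| <= B) ->
  (forall v, (fun k => ip (z k) v) @ U --> ip w v) ->
  vanish (fun k => h (z k) - h p) -> h w = h p.
Proof.
move=> b0 hism zB hw hv.
set Dd := h p - h w.
pose r1 k := ip (h (z k) - h p) (z k - w) - 2 * beta * ip (h (z k) - h p) Dd.
pose r2 k := ip (z k) Dd - ip w Dd.
have hk k : beta * ip Dd Dd <= r1 k + r2 k.
  have i1 := hism (z k) w; rewrite -ipxx in i1.
  have i2 : 0 <= beta * ip (h (z k) - h p) (h (z k) - h p) by rewrite mulr_ge0 ?ip_ge0 // ltW.
  move: i1 i2; rewrite /r1 /r2 /Dd; ipexp.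
  set a := h (z k); set c := h p; set d := h w; set zk := z k.
  rewrite ?(ipC c a) ?(ipC d a) ?(ipC zk a) ?(ipC w a) ?(ipC d c) ?(ipC zk c) ?(ipC w c)
          ?(ipC zk d) ?(ipC w d) ?(ipC w zk).
  move=> i1 i2; lra.
have B0 : 0 <= B by apply: le_trans (zB 0%N).
have h1 : r1 @ U --> 0.
  apply: (@lim0_bound _ _ (B + `|w| + 2 * beta * `|Dd|)); first by
    rewrite addr_ge0 ?mulr_ge0 ?addr_ge0 // ltW.
  2: exact: hv.
  move=> k; rewrite /r1.
  apply: le_trans (ler_normB _ _) _.
  rewrite normrM normrM (ger0_norm (ltW b0)) (ger0_norm (ler0n _ 2)).
  have c1 := CS (h (z k) - h p) (z k - w).
  have c2 := CS (h (z k) - h p) Dd.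
  have c3 : `|z k - w| <= B + `|w| by apply: le_trans (ler_normB _ _) _; rewrite lerD2r.
  have := normr_ge0 (h (z k) - h p); have := normr_ge0 Dd.
  have := normr_ge0 (ip (h (z k) - h p) Dd).
  nra.
have h2 : r2 @ U --> 0.
  rewrite -(subrr (ip w Dd)); apply: cvgB => //; exact: cvg_cst.
have := cvgr_to_ge (cvgD h1 h2) (nearU_all hk); rewrite addr0 => hle.
apply/esym/vec_eq; apply/eqP; rewrite eq_le ip_ge0 andbT.
have := hle UP UP; rewrite pmulr_rle0 //.
Qed.

Lemma wk_sol (D : set H) (P : H -> H) (h : H -> H) (p : H) (lam : R)
    (a b : nat -> H) (w : H) (B : R) :
  Defs.convex_set D -> is_metric_projection D P -> 0 < lam ->
  (forall k, b k = P (a k - lam *: h (a k))) ->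
  vanish (fun k => (a k - b k) - lam *: (h (a k) - h p)) ->
  (forall k, `|b k| <= B) ->
  (forall v, (fun k => ip (b k) v) @ U --> ip w v) ->
  h w = h p -> forall z, D z -> 0 <= ip (h w) (z - w).
Proof.
move=> hconv hP l0 hb hv bB hw hwp z Dz.
pose e k := (a k - b k) - lam *: (h (a k) - h p).
pose r1 k := ip (e k) (z - b k).
pose r2 k := ip (b k) (h p).
have hk k : r1 k + lam * r2 k <= lam * ip (h p) z.
  have := proj_var hconv hP (a k - lam *: h (a k)) Dz.
  rewrite -hb /r1 /r2 /e; ipexp.
  set x1 := a k; set x2 := h (a k); set x3 := b k; set x4 := h p.
  rewrite ?(ipC x2 x1) ?(ipC x3 x1) ?(ipC x4 x1) ?(ipC z x1) ?(ipC x3 x2) ?(ipC x4 x2) ?(ipC z x2)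
          ?(ipC x4 x3) ?(ipC z x3) ?(ipC z x4).
  lra.
have B0 : 0 <= B by apply: le_trans (bB 0%N).
have h1 : r1 @ U --> 0.
  apply: (@lim0_bound _ e (`|z| + B)); first by rewrite addr_ge0.
  2: exact: hv.
  move=> k; rewrite /r1.
  apply: le_trans (CS _ _) _.
  have c3 : `|z - b k| <= `|z| + B by apply: le_trans (ler_normB _ _) _; rewrite lerD2l.
  rewrite mulrC; apply: ler_wpM2r => //.
have h2 : (fun k => lam * r2 k) @ U --> lam * ip w (h p) by apply: cvgMl_tmp; exact: hw.
have := cvgr_to_le (cvgD h1 h2) (nearU_all hk).
rewrite add0r hwp => /(_ UP UP) hle.
rewrite ipBr (ipC (h p) w).
have : lam * (ip (h p) z - ip w (h p)) >= 0 by lra.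
by rewrite pmulr_rge0 // subr_ge0.
Qed.
End UL.
Section Main.
Variables (C Q : set H) (f g : H -> H) (alpha1 alpha2 lam : R) (PC PQ PG : H -> H)
  (x y : nat -> H).
Hypotheses (hC : nonempty_closed_convex C) (hQ : nonempty_closed_convex Q)
  (a1 : 0 < alpha1) (a2 : 0 < alpha2)
  (hf : inverse_strongly_monotone ip alpha1 f)
  (hg : inverse_strongly_monotone ip alpha2 g)
  (l0 : 0 < lam) (l2 : lam < 2 * Num.min alpha1 alpha2)
  (hne : SOL ip C f `&` SOL ip Q g !=set0)
  (hPC : is_metric_projection C PC) (hPQ : is_metric_projection Q PQ)
  (hPG : is_metric_projection (SOL ip C f `&` SOL ip Q g) PG)
  (hy : forall k, y k = PQ (x k - lam *: g (x k)))
  (hx : forall k, x k.+1 = PC (y k - lam *: f (y k))).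

Local Notation Gam := (SOL ip C f `&` SOL ip Q g).

Let cC : Defs.convex_set C := hC.2.2.
Let cQ : Defs.convex_set Q := hQ.2.2.

Let c1 : 0 < lam * (2 * alpha1 - lam).
Proof.
have h : Num.min alpha1 alpha2 <= alpha1 by rewrite ge_min lexx.
have : lam < 2 * alpha1 by apply: (lt_le_trans l2); rewrite ler_pM2l.
move=> h'; apply: mulr_gt0 => //; lra.
Qed.
Let c2 : 0 < lam * (2 * alpha2 - lam).
Proof.
have h : Num.min alpha1 alpha2 <= alpha2 by rewrite ge_min lexx orbT.
have : lam < 2 * alpha2 by apply: (lt_le_trans l2); rewrite ler_pM2l.
move=> h'; apply: mulr_gt0 => //; lra.
Qed.

Definition eg p k := (x k - y k) - lam *: (g (x k) - g p).
Definition ef p k := (y k - x k.+1) - lam *: (f (y k) - f p).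

Lemma ineq_g p k : Gam p ->
  ip (y k - p) (y k - p) + ip (eg p k) (eg p k)
  + lam * (2 * alpha2 - lam) * `|g (x k) - g p| ^+ 2 <= ip (x k - p) (x k - p).
Proof.
move=> [_ Sp].
have := step_ineq cQ hPQ (x k) hg (ltW l0) (sol_fix cQ hPQ (ltW l0) Sp).
by rewrite -hy.
Qed.

Lemma ineq_f p k : Gam p ->
  ip (x k.+1 - p) (x k.+1 - p) + ip (ef p k) (ef p k)
  + lam * (2 * alpha1 - lam) * `|f (y k) - f p| ^+ 2 <= ip (y k - p) (y k - p).
Proof.
move=> [Sp _].
have := step_ineq cC hPC (y k) hf (ltW l0) (sol_fix cC hPC (ltW l0) Sp).
by rewrite -hx.
Qed.

Lemma fej p k : Gam p -> ip (x k.+1 - p) (x k.+1 - p) <= ip (x k - p) (x k - p).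
Proof.
move=> Gp; have h1 := ineq_g k Gp; have h2 := ineq_f k Gp.
have := ip_ge0 (eg p k); have := ip_ge0 (ef p k).
have := mulr_ge0 (ltW c1) (sqr_ge0 `|f (y k) - f p|).
have := mulr_ge0 (ltW c2) (sqr_ge0 `|g (x k) - g p|).
lra.
Qed.

Lemma fej_y p k : Gam p -> ip (y k - p) (y k - p) <= ip (x k - p) (x k - p).
Proof.
move=> Gp; have h1 := ineq_g k Gp.
have := ip_ge0 (eg p k).
have := mulr_ge0 (ltW c2) (sqr_ge0 `|g (x k) - g p|).
lra.
Qed.

Lemma fej_le p k m : Gam p -> (k <= m)%N -> ip (x m - p) (x m - p) <= ip (x k - p) (x k - p).
Proof. by move=> Gp; apply: (mono_le (a := fun k => ip (x k - p) (x k - p))) => j; apply: fej. Qed.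

Lemma sq_le (a : H) c : 0 <= c -> ip a a <= c ^+ 2 -> `|a| <= c.
Proof.
move=> c0 h; rewrite ipxx in h; rewrite leNgt; apply/negP => hc; have := normr_ge0 a; nra.
Qed.

Lemma bnd_x p k : Gam p -> `|x k| <= `|p| + `|x 0%N - p|.
Proof.
move=> Gp.
have : `|x k - p| <= `|x 0%N - p|.
  apply: sq_le => //; rewrite -ipxx; exact: fej_le.
have := ler_normD (x k - p) p; rewrite subrK; lra.
Qed.

Lemma bnd_y p k : Gam p -> `|y k| <= `|p| + `|x 0%N - p|.
Proof.
move=> Gp.
have : `|y k - p| <= `|x 0%N - p|.
  apply: sq_le => //; rewrite -ipxx; apply: le_trans (fej_y k Gp) _; exact: fej_le.
have := ler_normD (y k - p) p; rewrite subrK; lra.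
Qed.

Lemma vanish_of (s : nat -> H) (a : nat -> R) (c : R) : 0 < c ->
  (forall k, a k.+1 <= a k) -> (forall k, 0 <= a k) ->
  (forall k, c * `|s k| ^+ 2 <= a k - a k.+1) -> vanish s.
Proof.
move=> cp am a0 hs e e0.
have ce : 0 < c * e ^+ 2 by rewrite mulr_gt0 // exprn_gt0.
have [N hN] := mono_small am a0 ce.
exists N => // k /= Nk.
have h1 := hN k.+1 (leqW Nk).
have h2 := mono_le am Nk.
have h3 := hs k.
have : c * `|s k| ^+ 2 < c * e ^+ 2 by lra.
rewrite ltr_pM2l // => hh; rewrite ltNge; apply/negP => hc; have := normr_ge0 (s k); nra.
Qed.

Lemma vanish_comb (s s1 s2 : nat -> H) (K : R) : 0 <= K ->
  (forall k, `|s k| <= `|s1 k| + K * `|s2 k|) -> vanish s1 -> vanish s2 -> vanish s.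
Proof.
move=> K0 hs v1 v2 e e0.
have e1 : 0 < e / 2 by apply: divr_gt0.
have e2 : 0 < e / (2 * (K + 1)) by apply: divr_gt0 => //; lra.
near=> k.
have h1 : `|s1 k| < e / 2 by near: k; exact: v1.
have h2 : `|s2 k| < e / (2 * (K + 1)) by near: k; exact: v2.
apply: le_lt_trans (hs k) _.
have hK : e / (2 * (K + 1)) * (2 * (K + 1)) = e by rewrite mulfVK // gt_eqF //; lra.
have := normr_ge0 (s2 k); nra.
Unshelve. all: by end_near.
Qed.

Lemma sqn a : ip a a = `|a| ^+ 2.
Proof. exact: ipxx. Qed.

Lemma van_g p : Gam p -> vanish (fun k => g (x k) - g p).
Proof.
move=> Gp; apply: (vanish_of (a := fun k => ip (x k - p) (x k - p)) c2).
- by move=> k; apply: fej.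
- by move=> k; apply: ip_ge0.
move=> k /=; have h1 := ineq_g k Gp; have h2 := ineq_f k Gp.
have := ip_ge0 (eg p k); have := ip_ge0 (ef p k).
have := mulr_ge0 (ltW c1) (sqr_ge0 `|f (y k) - f p|).
lra.
Qed.

Lemma van_eg p : Gam p -> vanish (eg p).
Proof.
move=> Gp; apply: (vanish_of (a := fun k => ip (x k - p) (x k - p)) ltr01).
- by move=> k; apply: fej.
- by move=> k; apply: ip_ge0.
move=> k /=; have h1 := ineq_g k Gp; have h2 := ineq_f k Gp.
rewrite mul1r -sqn.
have := ip_ge0 (ef p k).
have := mulr_ge0 (ltW c1) (sqr_ge0 `|f (y k) - f p|).
have := mulr_ge0 (ltW c2) (sqr_ge0 `|g (x k) - g p|).
lra.
Qed.

Lemma van_f p : Gam p -> vanish (fun k => f (y k) - f p).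
Proof.
move=> Gp; apply: (vanish_of (a := fun k => ip (x k - p) (x k - p)) c1).
- by move=> k; apply: fej.
- by move=> k; apply: ip_ge0.
move=> k /=; have h1 := ineq_g k Gp; have h2 := ineq_f k Gp.
have := ip_ge0 (eg p k); have := ip_ge0 (ef p k).
have := mulr_ge0 (ltW c2) (sqr_ge0 `|g (x k) - g p|).
lra.
Qed.

Lemma van_ef p : Gam p -> vanish (ef p).
Proof.
move=> Gp; apply: (vanish_of (a := fun k => ip (x k - p) (x k - p)) ltr01).
- by move=> k; apply: fej.
- by move=> k; apply: ip_ge0.
move=> k /=; have h1 := ineq_g k Gp; have h2 := ineq_f k Gp.
rewrite mul1r -sqn.
have := ip_ge0 (eg p k).
have := mulr_ge0 (ltW c1) (sqr_ge0 `|f (y k) - f p|).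
have := mulr_ge0 (ltW c2) (sqr_ge0 `|g (x k) - g p|).
lra.
Qed.

Lemma van_xy p : Gam p -> vanish (fun k => x k - y k).
Proof.
move=> Gp; apply: (vanish_comb (s1 := eg p) (s2 := fun k => g (x k) - g p) (K := lam)).
- exact: ltW.
- move=> k; have -> : x k - y k = eg p k + lam *: (g (x k) - g p) by rewrite /eg subrK.
  by apply: le_trans (ler_normD _ _) _; rewrite normrZ (gtr0_norm l0).
- exact: van_eg.
- exact: van_g.
Qed.

Lemma van_yx p : Gam p -> vanish (fun k => y k - x k.+1).
Proof.
move=> Gp; apply: (vanish_comb (s1 := ef p) (s2 := fun k => f (y k) - f p) (K := lam)).
- exact: ltW.
- move=> k; have -> : y k - x k.+1 = ef p k + lam *: (f (y k) - f p) by rewrite /ef subrK.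
  by apply: le_trans (ler_normD _ _) _; rewrite normrZ (gtr0_norm l0).
- exact: van_ef.
- exact: van_f.
Qed.

Lemma cG : Defs.convex_set Gam.
Proof.
have s1 := sol_convex cC a1 hf; have s2 := sol_convex cQ a2 hg.
move=> a b t [Sa Ta] [Sb Tb] t0 t1; split; [exact: s1|exact: s2].
Qed.

Definition dd k := ip (x k - PG (x k)) (x k - PG (x k)).

Lemma sq_mono (a b : H) : `|a| <= `|b| -> ip a a <= ip b b.
Proof. by move=> h; rewrite !ipxx lerXn2r ?nnegrE. Qed.

Lemma dd_mono k : dd k.+1 <= dd k.
Proof.
have h1 : dd k.+1 <= ip (x k.+1 - PG (x k)) (x k.+1 - PG (x k)).
  by apply: sq_mono; exact: (hPG _).2 _ (proj_in hPG _).
apply: le_trans h1 _; apply: fej; exact: (proj_in hPG).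
Qed.

Lemma u_cauchy k m : (k <= m)%N ->
  ip (PG (x m) - PG (x k)) (PG (x m) - PG (x k)) <= 2 * (dd k - dd m).
Proof.
move=> km.
set um := PG (x m); set uk := PG (x k).
have Gum : Gam um by exact: (proj_in hPG).
have Guk : Gam uk by exact: (proj_in hPG).
have Gz := cG Gum Guk (t:=2^-1) ltac:(by rewrite invr_ge0) ltac:(by rewrite invf_le1 ?ler1n).
have h1 := sq_mono ((hPG (x m)).2 _ Gz).
have h2 := fej_le Guk km.
move: h1 h2; rewrite /dd -/um -/uk; ipexp.
have hh : (1 - (2:R)^-1) = 2^-1 by field.
rewrite hh.
set xm := x m; set xk := x k.
rewrite ?(ipC um xm) ?(ipC uk xm) ?(ipC uk um) ?(ipC xk xm) ?(ipC um xk) ?(ipC uk xk).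
have : (2:R)^-1 * 2 = 1 by rewrite mulVf.
move=> h0 h1 h2.
nra.
Qed.
Lemma u_cvg : exists xs : H, (fun k => PG (x k)) @ \oo --> xs.
Proof.
have : cvg ((fun k => PG (x k)) @ \oo).
  apply/cauchy_cvgP; apply: cauchy_exP => eps eps0.
  have e0 : 0 < eps ^+ 2 / 4 by apply: divr_gt0 => //; rewrite exprn_gt0.
  have [N hN] := mono_small dd_mono (fun k => ip_ge0 _) e0.
  exists (PG (x N)); exists N => // m /= Nm.
  rewrite -ball_normE /=.
  have h1 := u_cauchy Nm; have h2 := hN m Nm.
  rewrite ipxx distrC in h1.
  rewrite ltNge; apply/negP => hc.
  have := normr_ge0 (PG (x m) - PG (x N)); nra.
by move=> /cvg_ex [xs hxs]; exists xs.
Qed.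

Section US.
Variables (U : set_system nat) (UU : UltraFilter U).
Hypothesis Uinf : forall A, \oo A -> U A.
#[local] Instance UP' : ProperFilter U. Proof. by apply: ultra_proper. Qed.

Lemma wk_shift (z1 z2 : nat -> H) (w : H) :
  vanish (fun k => z1 k - z2 k) ->
  (forall v, (fun k => ip (z1 k) v) @ U --> ip w v) ->
  (forall v, (fun k => ip (z2 k) v) @ U --> ip w v).
Proof.
move=> hv h1 v.
have h0 : (fun k => ip (z1 k - z2 k) v) @ U --> 0.
  apply: (lim0_bound UU Uinf (normr_ge0 v) _ hv) => k.
  by rewrite mulrC; exact: CS.
apply: (cvgU_eq (U := U) (r' := fun k => ip (z1 k) v - ip (z1 k - z2 k) v)).
  by move=> k; ipexp; lra.
by rewrite -[ip w v]subr0; apply: cvgB.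
Qed.

Lemma Ustep (xs : H) : (fun k => PG (x k)) @ \oo --> xs ->
  Gam xs /\ forall v, (fun k => ip (x k) v) @ U --> ip xs v.
Proof.
move=> hxs.
case: hne => p0 Gp0.
have [w hw] := wk_lim UU (fun k => bnd_x k Gp0).
have hyw := wk_shift (van_xy Gp0) hw.
have hx1w := wk_shift (z2 := fun k => x k.+1) (van_yx Gp0) hyw.
have Qw : Q w.
  apply: (wk_closed UU cQ hPQ (z := y)) => //.
  by move=> k; rewrite hy; exact: (proj_in hPQ).
have Cw : C w.
  apply: (wk_closed UU cC hPC (z := fun k => x k.+1)) => //.
  by move=> k; rewrite hx; exact: (proj_in hPC).
have gw : g w = g p0 := wk_ism UU Uinf a2 hg (fun k => bnd_x k Gp0) hw (van_g Gp0).
have fw : f w = f p0 := wk_ism UU Uinf a1 hf (fun k => bnd_y k Gp0) hyw (van_f Gp0).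
have SQ := wk_sol UU Uinf cQ hPQ l0 hy (van_eg Gp0) (fun k => bnd_y k Gp0) hyw gw.
have SC := wk_sol UU Uinf cC hPC l0 (b := fun k => x k.+1) hx (van_ef Gp0)
   (fun k => bnd_x k.+1 Gp0) hx1w fw.
have Gw : Gam w by split; split.
suff -> : xs = w by split.
set u := fun k => PG (x k).
set K := `|x 0%N - p0|.
have vu' : vanish (fun k => xs - u k).
  move=> e e0; exact: ((cvgrPdist_lt _ _).1 hxs e e0).
have vu : vanish (fun k => u k - xs) by apply: vanish_sym.
pose r k := ip (x k) (w - xs) - ip (u k) (w - xs).
pose t k := K * `|u k - xs|.
have rt k : r k - t k <= 0.
  have h1 := proj_var cG hPG (x k) Gw.
  have h2 : `|x k - u k| <= K.
    apply: le_trans ((hPG (x k)).2 _ Gp0) _.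
    apply: (sq_le (normr_ge0 (x 0%N - p0))).
    rewrite -ipxx; exact: fej_le.
  have h3 := CS' (x k - u k) (u k - xs).
  have h4 : `|x k - u k| * `|u k - xs| <= t k by apply: ler_wpM2r; [exact: normr_ge0|exact: h2].
  have e : r k = ip (x k - u k) (w - u k) + ip (x k - u k) (u k - xs).
    rewrite /r; ipexp; lra.
  rewrite e; lra.
have hu : (fun k => ip (u k) (w - xs)) @ U --> ip xs (w - xs).
  apply: (wk_shift (z1 := fun _ => xs)).
    exact: vu'.
  by move=> v; exact: cvg_cst.
have ht : t @ U --> 0.
  apply: (lim0_bound UU Uinf (normr_ge0 (x 0%N - p0)) _ vu) => k.
  rewrite /t ger0_norm //; apply: mulr_ge0; exact: normr_ge0.
have hr : r @ U --> ip w (w - xs) - ip xs (w - xs) by apply: cvgB.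
have := cvgr_to_le (cvgB hr ht) (nearU_all UU rt).
rewrite subr0 => /(_ UP' UP') hle.
apply: vec_eq; apply/eqP; rewrite eq_le ip_ge0 andbT.
move: hle; ipexp; rewrite (ipC xs w); lra.
Qed.
End US.
Lemma main_conc : exists xs : H, Gam xs /\ weakly_converges ip x xs /\
  (fun k => PG (x k)) @ \oo --> xs.
Proof.
have [xs hxs] := u_cvg.
have [U0 [UU0 sub0]] := @ultraFilterLemma nat \oo _.
have [Gxs _] := Ustep UU0 sub0 hxs.
exists xs; split => //; split => //.
move=> z; apply/cvgrPdist_lt => e e0.
case: (pselect (\forall k \near \oo, `|ip xs z - ip (x k) z| < e)) => // hn.
exfalso.
pose S := [set k | e <= `|ip xs z - ip (x k) z|].
pose Fi := filter_from setT (fun N => [set k | (N <= k)%N /\ S k]).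
have FiF : Filter Fi.
  apply: filter_from_filter; first by exists 0%N.
  move=> i j _ _; exists (maxn i j) => // k [hk Sk]; split; split => //.
    exact: leq_trans (leq_maxl i j) hk.
  exact: leq_trans (leq_maxr i j) hk.
have FiP : ProperFilter Fi.
  apply: filter_from_proper => N _.
  case: (pselect (exists k, (N <= k)%N /\ S k)) => [[k hk]|nex]; first by exists k.
  exfalso; apply: hn; exists N => // k /= Nk.
  rewrite ltNge; apply/negP => hk; apply: nex; exists k; split => //.
have [U [UU sub]] := ultraFilterLemma FiP.
have UP : ProperFilter U by apply: ultra_proper.
have Uinf : forall A, \oo A -> U A.
  move=> A [N _ hN]; apply: sub; exists N => // k [hk _]; exact: hN.
have [_ hw] := Ustep UU Uinf hxs.
have h1 : \forall k \near U, `|ip xs z - ip (x k) z| < e.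
  by apply: ((cvgrPdist_lt _ _).1 (hw z) e e0).
have h2 : U S by apply: sub; exists 0%N => // k [].
have [k [hk1 hk2]] := filter_ex (filterI h1 h2).
move: hk1 hk2; rewrite /S /=; lra.
Qed.
End Main.
End Inner.

Unset Implicit Arguments.

Theorem theorem3p5 (R : realType) (H : completeNormedModType R)
  (inner : H -> H -> R) (C Q : set H) (f g : H -> H)
  (alpha1 alpha2 lambda : R) (PC PQ PG : H -> H) (x y : nat -> H) :
  is_inner_product inner ->
  nonempty_closed_convex C -> nonempty_closed_convex Q ->
  0 < alpha1 -> 0 < alpha2 ->
  inverse_strongly_monotone inner alpha1 f ->
  inverse_strongly_monotone inner alpha2 g ->
  0 < lambda -> lambda < 2 * Num.min alpha1 alpha2 ->
  SOL inner C f `&` SOL inner Q g !=set0 ->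
  is_metric_projection C PC -> is_metric_projection Q PQ ->
  is_metric_projection (SOL inner C f `&` SOL inner Q g) PG ->
  (forall k, y k = PQ (x k - lambda *: g (x k))) ->
  (forall k, x k.+1 = PC (y k - lambda *: f (y k))) ->
  exists xs : H, (SOL inner C f `&` SOL inner Q g) xs /\
    weakly_converges inner x xs /\
    (fun k => PG (x k)) @ \oo --> xs.
Proof.
move=> hI hC hQ a1 a2 hf hg l0 l2 hne hPC hPQ hPG hy hx.
exact: (main_conc hI hC hQ a1 a2 hf hg l0 l2 hne hPC hPQ hPG hy hx).
Qed.
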